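(* Let $(\mathbf{S}^1, A^1, U^1, \mathbf{S}^2,\ldots)$ be a process as in the context satisfying (A0) and (C1)–(C3), and let $\phi:\mathcal{S}\to\mathbb{R}^q$ be measurable, with $\mathbf{S}^t_\phi=\phi(\mathbf{S}^t)$ and $\mathbf{Y}^{t+1}=(U^t,(\mathbf{S}^{t+1})^\top)^\top$. Fix $t$ and suppose at least one of the following holds: (i) $\{\mathbf{Y}^{t+1}-\mathbb{E}(\mathbf{Y}^{t+1}\mid\mathbf{S}^t_\phi,A^t)\}\perp\!\!\!\perp\mathbf{S}^t\mid A^t$; (ii) $\{\mathbf{S}^t-\mathbb{E}(\mathbf{S}^t\mid\mathbf{S}^t_\phi)\}\perp\!\!\!\perp(\mathbf{Y}^{t+1},\mathbf{S}^t_\phi)\mid A^t$. Then $\mathbf{Y}^{t+1}\perp\!\!\!\perp\mathbf{S}^t\mid\mathbf{S}^t_\phi,A^t$.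
   Context: The process: $\mathbf{S}^t\in\mathcal{S}\subseteq\mathbb{R}^p$ are states, $A^t\in\mathcal{A}=\{1,\ldots,K\}$ decisions, and $U^t=U(\mathbf{S}^t,A^t,\mathbf{S}^{t+1})$ for a fixed deterministic measurable function $U$ with $\sup_t|U^t|\le M$ a.s. (so all conditional expectations above exist; the state $\mathbf{S}^t$ is assumed integrable). (A0): $P(\mathbf{S}^{t+1}\in\mathcal{G}\mid A^t,\mathbf{S}^t,\ldots,A^1,\mathbf{S}^1)=P(\mathbf{S}^{t+1}\in\mathcal{G}\mid A^t,\mathbf{S}^t)$ for all measurable $\mathcal{G}$, with the kernel independent of $t$. (C1)–(C3) are consistency, positivity and sequential ignorability of the potential-outcome model: (C1) $\mathbf{S}^t=\mathbf{S}^{*t}(A^1,\ldots,A^{t-1})$ where $\mathbf{S}^{*t}(\overline{\mathbf{a}}^{t-1})$ are potential states; (C2) $P(A^t=a\mid \mathbf{S}^1,\ldots,\mathbf{S}^t,A^1,\ldots,A^{t-1})\ge\epsilon>0$ a.s. for all $a$; (C3) the collection of all potential states is independent of $A^t$ given $(\mathbf{S}^1,\ldots,\mathbf{S}^t,A^1,\ldots,A^{t-1})$. *)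

(* Defs.v *)
From mathcomp Require Import all_boot all_order all_algebra.
From mathcomp Require Import all_classical all_reals all_analysis.

Set Implicit Arguments.
Unset Strict Implicit.
Unset Printing Implicit Defensive.

Import Order.TTheory GRing.Theory Num.Theory.
Local Open Scope classical_set_scope.
Local Open Scope ring_scope.

(* Vectors of R^n are represented as n.-tuple R, equipped with the library's
   product sigma-algebra (generated by the coordinate projections). *)
Definition vsub (R : realType) (n : nat) (u v : n.-tuple R) : n.-tuple R :=
  [tuple tnth u i - tnth v i | i < n].

Section CondExp.
Context (R : realType) (d : measure_display) (Omega : measurableType d)
        (P : probability Omega R).

(* m \o Z is a version of the conditional expectation E(X | Z)
   (Doob-Dynkin form of a sigma(Z)-measurable random variable). *)
Definition is_condexp (dT : measure_display) (T : measurableType dT)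
    (X : Omega -> R) (Z : Omega -> T) (m : T -> R) : Prop :=
  [/\ measurable_fun setT m,
      P.-integrable setT (EFin \o X),
      P.-integrable setT (EFin \o (m \o Z)) &
      forall C : set T, measurable C ->
        (\int[P]_(w in Z @^-1` C) (X w)%:E =
         \int[P]_(w in Z @^-1` C) (m (Z w))%:E)%E].

Definition is_vcondexp (dT : measure_display) (T : measurableType dT) (n : nat)
    (X : Omega -> n.-tuple R) (Z : Omega -> T) (m : T -> n.-tuple R) : Prop :=
  forall i : 'I_n,
    is_condexp (fun w => tnth (X w) i) Z (fun z => tnth (m z) i).

Definition condindep (d1 d2 d3 : measure_display)
    (T1 : measurableType d1) (T2 : measurableType d2) (T3 : measurableType d3)
    (X : Omega -> T1) (Y : Omega -> T2) (Z : Omega -> T3) : Prop :=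
  forall (A : set T1) (B : set T2), measurable A -> measurable B ->
  exists mA mB : T3 -> R,
    [/\ is_condexp (\1_(X @^-1` A)) Z mA,
        is_condexp (\1_(Y @^-1` B)) Z mB &
        is_condexp (\1_(X @^-1` A `&` Y @^-1` B)) Z (fun z => mA z * mB z)].

End CondExp.

Section Process.
Context (R : realType) (d : measure_display) (Omega : measurableType d)
        (P : probability Omega R) (p : nat).

(* Time is indexed from 0: S t, A t stand for S^{t+1}, A^{t+1} of the paper. *)

Definition history (S : nat -> Omega -> p.-tuple R) (A : nat -> Omega -> nat)
    (t : nat) (w : Omega) : (t.+1).-tuple (p.-tuple R * nat) :=
  [tuple (S i w, A i w) | i < t.+1].

Definition prehistory (S : nat -> Omega -> p.-tuple R) (A : nat -> Omega -> nat)
    (t : nat) (w : Omega) : (t.+1).-tuple (p.-tuple R) * t.-tuple nat :=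
  ([tuple S i w | i < t.+1], [tuple A i w | i < t]).

Definition markov_A0 (S : nat -> Omega -> p.-tuple R) (A : nat -> Omega -> nat)
    : Prop :=
  exists k : p.-tuple R -> nat -> set (p.-tuple R) -> R,
    forall (t : nat) (G : set (p.-tuple R)), measurable G ->
      is_condexp P (\1_(S t.+1 @^-1` G)) (history S A t)
        (fun h => k (tnth h ord_max).1 (tnth h ord_max).2 G).

Definition consistency_C1 (S : nat -> Omega -> p.-tuple R)
    (A : nat -> Omega -> nat)
    (Sstar : forall t : nat, t.-tuple nat -> Omega -> p.-tuple R) : Prop :=
  forall t w, S t w = Sstar t [tuple A i w | i < t] w.

Definition positivity_C2 (K : nat) (S : nat -> Omega -> p.-tuple R)
    (A : nat -> Omega -> nat) : Prop :=
  exists eps : R, 0 < eps /\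
    forall (t a : nat), (0 < a <= K)%N ->
      exists m : (t.+1).-tuple (p.-tuple R) * t.-tuple nat -> R,
        is_condexp P (\1_(A t @^-1` [set a])) (prehistory S A t) m /\
        {ae P, forall w, eps <= m (prehistory S A t w)}.

(* (C3): sequential ignorability: the collection of all potential states is
   conditionally independent of A^t given the pre-decision history; stated
   for every finite subfamily of potential states (which generate the
   sigma-algebra of the whole collection). *)
Definition ignorability_C3 (K : nat) (S : nat -> Omega -> p.-tuple R)
    (A : nat -> Omega -> nat)
    (Sstar : forall t : nat, t.-tuple nat -> Omega -> p.-tuple R) : Prop :=
  forall (t n : nat) (idx : n.-tuple {s : nat & s.-tuple nat}),
    (forall j : 'I_n, all (fun a => (0 < a <= K)%N) (projT2 (tnth idx j))) ->
    condindep P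
      (fun w => map_tuple (fun i => Sstar (projT1 i) (projT2 i) w) idx)
      (A t) (prehistory S A t).

End Process.

(* Main.v *)
Require Import Defs.
From HB Require Import structures.
From mathcomp Require Import all_boot all_order all_algebra.
From mathcomp Require Import all_classical all_reals all_analysis.
From mathcomp Require Import measurable_realfun.
From mathcomp Require Import ring lra.
Import numFieldNormedType.Exports.
Set Implicit Arguments.
Unset Strict Implicit.
Unset Printing Implicit Defensive.
Import Order.TTheory GRing.Theory Num.Theory.
Local Open Scope classical_set_scope.
Local Open Scope ring_scope.
Section eqint.
Local Open Scope ereal_scope.
Context d (T : measurableType d) (R : realType).
Variables (m1 m2 : {measure set T -> \bar R}) (D1 D2 : set T).
Hypotheses (mD1 : measurable D1) (mD2 : measurable D2).
Hypothesis m12 : forall E, measurable E -> m1 (E `&` D1) = m2 (E `&` D2).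
Import HBNNSimple.

Let eqint_nnsfun (h : {nnsfun T >-> R}) :
  \int[m1]_(x in D1) (h x)%:E = \int[m2]_(x in D2) (h x)%:E.
Proof.
under eq_integral do rewrite fimfunE -fsumEFin//.
rewrite ge0_integral_fsum//; last 2 first.
  - by move=> r; exact/measurable_EFinP/measurableT_comp.
  - by move=> n x _; rewrite EFinM nnfun_muleindic_ge0.
apply/esym; under eq_integral do rewrite fimfunE -fsumEFin//.
rewrite ge0_integral_fsum//; last 2 first.
  - by move=> r; exact/measurable_EFinP/measurableT_comp.
  - by move=> n x _; rewrite EFinM nnfun_muleindic_ge0.
apply: eq_fsbigr => r _; rewrite !integralZl_indic_nnsfun//.
by rewrite !integral_indic// m12.
Qed.

Lemma eqint_measures (f : T -> \bar R) : measurable_fun setT f ->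
  (forall x, 0 <= f x) ->
  \int[m1]_(x in D1) f x = \int[m2]_(x in D2) f x.
Proof.
move=> mf f0; pose f_ := nnsfun_approx measurableT mf.
have cv x : (EFin \o f_ ^~ x) @ \oo --> f x.
  by apply: cvg_nnsfun_approx => // y _; exact: f0.
transitivity (limn (fun n => \int[m1]_(x in D1) (f_ n x)%:E)).
  rewrite -monotone_convergence//=.
  - by apply: eq_integral => x _; apply/esym/cvg_lim => //; exact: cv.
  - by move=> n; exact/measurable_EFinP/measurable_funTS.
  - by move=> n x _; rewrite lee_fin.
  - by move=> x _ a b ab; rewrite lee_fin//; exact/lefP/nd_nnsfun_approx.
transitivity (limn (fun n => \int[m2]_(x in D2) (f_ n x)%:E)).
  by congr (limn _); apply/funext => n; rewrite eqint_nnsfun.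
rewrite -monotone_convergence//=.
- by apply: eq_integral => x _; apply/cvg_lim => //; exact: cv.
- by move=> n; exact/measurable_EFinP/measurable_funTS.
- by move=> n x _; rewrite lee_fin.
- by move=> x _ a b ab; rewrite lee_fin//; exact/lefP/nd_nnsfun_approx.
Qed.
End eqint.
Definition law (R : realType) (d : measure_display) (Omega : measurableType d)
  (P : probability Omega R) (F : set Omega) (mF : measurable F)
  (dT : measure_display) (T : measurableType dT) (X : Omega -> T)
  (mX : measurable_fun setT X) : set T -> \bar R :=
  fun A => P (X @^-1` A `&` F).
Section law.
Local Open Scope ereal_scope.
Context (R : realType) (d : measure_display) (Omega : measurableType d)
  (P : probability Omega R).
Context (F : set Omega) (mF : measurable F) (dT : measure_display)
  (T : measurableType dT) (X : Omega -> T) (mX : measurable_fun setT X).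

Local Notation law := (@law R d Omega P F mF dT T X mX).

Let mpre A : measurable A -> measurable (X @^-1` A `&` F).
Proof. by move=> mA; apply: measurableI => //; rewrite -[_ @^-1` _]setTI; exact: mX. Qed.

Let law0 : law set0 = 0.
Proof. by rewrite /law preimage_set0 set0I measure0. Qed.

Let law_ge0 A : 0 <= law A.
Proof. exact: measure_ge0. Qed.

Let law_sigma_additive : semi_sigma_additive law.
Proof.
move=> G mG tG mUG; rewrite /law preimage_bigcup setI_bigcupl.
apply: measure_semi_sigma_additive.
- by move=> n; exact: mpre.
- apply/trivIsetP => /= i j _ _ ij; rewrite setIACA -preimage_setI.
  by move/trivIsetP : tG => /(_ _ _ _ _ ij) ->//; rewrite preimage_set0 !set0I.
- by rewrite -setI_bigcupl -preimage_bigcup; exact: mpre.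
Qed.

HB.instance Definition _ := isMeasure.Build _ _ _
  law law0 law_ge0 law_sigma_additive.

Let law_fin : fin_num_fun law.
Proof.
move=> A mA; rewrite ge0_fin_numE ?measure_ge0//.
by rewrite (le_lt_trans (probability_le1 P (mpre mA)))// ltry.
Qed.

HB.instance Definition _ := Measure_isFinite.Build _ _ _ law law_fin.

Lemma lawE A : law A = P (X @^-1` A `&` F). Proof. by []. Qed.

Lemma integral_law (C : set T) (f : T -> \bar R) : measurable C ->
  measurable_fun setT f -> (forall y, 0 <= f y) ->
  \int[law]_(y in C) f y = \int[P]_(x in X @^-1` C `&` F) f (X x).
Proof.
move=> mC mf f0.
have -> : \int[law]_(y in C) f y = \int[pushforward (mrestr P mF) X]_(y in C) f y by [].
rewrite (ge0_integral_pushforward mX)//; last exact: measurable_funTS.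
apply: eqint_measures => //.
- by rewrite -[_ @^-1` _]setTI; exact: mX.
- exact: mpre.
- by move=> E mE; rewrite /mrestr setIA.
- exact: measurableT_comp.
- by move=> x; exact: f0.
Qed.
End law.
Section condexpRN.
Local Open Scope ereal_scope.
Context (R : realType) (d : measure_display) (Omega : measurableType d)
  (P : probability Omega R).
Context (dT : measure_display) (T : measurableType dT) (Z : Omega -> T)
  (mZ : measurable_fun setT Z) (F : set Omega) (mF : measurable F).

Lemma condexp_RN : exists m : T -> R,
  [/\ measurable_fun setT m, (forall z, (0 <= m z)%R),
      P.-integrable setT (EFin \o (m \o Z)) &
      forall (C : set T) (h : T -> \bar R), measurable C ->
        measurable_fun setT h -> (forall y, 0 <= h y) ->
        \int[P]_(x in Z @^-1` C `&` F) h (Z x) =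
        \int[P]_(x in Z @^-1` C) ((m (Z x))%:E * h (Z x))].
Proof.
pose mu := @law R d Omega P setT measurableT dT T Z mZ.
pose nu := @law R d Omega P F mF dT T Z mZ.
have numu : nu `<< mu.
  move=> N hN B mB BN; have muB0 := hN B mB BN.
  apply/eqP; rewrite eq_le measure_ge0 andbT -muB0.
  rewrite /nu /mu !lawE setIT; apply: le_measure; rewrite ?inE.
  - by apply: measurableI => //; rewrite -[_ @^-1` _]setTI; exact: mZ.
  - by rewrite -[_ @^-1` _]setTI; exact: mZ.
  - exact: subIsetl.
pose f := Radon_Nikodym_SigmaFinite.f nu mu.
have fi : mu.-integrable setT f := Radon_Nikodym_SigmaFinite.f_integrable numu.
have mf : measurable_fun setT f := measurable_int _ fi.
have f0 x : 0 <= f x := Radon_Nikodym_SigmaFinite.f_ge0 numu x.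
have ff x : f x \is a fin_num := Radon_Nikodym_SigmaFinite.f_fin_num numu x.
exists (fine \o f); split.
- exact: measurableT_comp (fine_measurable _) mf.
- by move=> z /=; rewrite fine_ge0.
- apply/integrableP; split.
    apply/measurable_EFinP; apply: measurableT_comp => //.
    exact: measurableT_comp (fine_measurable _) mf.
  have := fi; move/integrableP => [_]; rewrite integral_law//; last first.
  + exact: measurableT_comp.
  rewrite preimage_setT setIT.
  by move=> H; under eq_integral do rewrite /= -abse_EFin fineK//.
- move=> C h mC mh h0.
  have := Radon_Nikodym_SigmaFinite.change_of_variables numu (E := C) (f := h).
  move=> /(_ h0 mC (measurable_funTS mh)).
  rewrite [RHS]integral_law//; last first.
  rewrite integral_law//; last 2 first.
  + by apply: emeasurable_funM.
  + by move=> y; apply: mule_ge0.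
  rewrite setIT => <-; apply: eq_integral => x _ /=.
  by rewrite fineK// muleC.
Qed.
End condexpRN.
Section disc.
Local Open Scope ereal_scope.
Context (R : realType) (d : measure_display) (Omega : measurableType d)
  (P : probability Omega R).

Lemma condexp_nat (G : set Omega) (mG : measurable G) (D : Omega -> nat)
  (mD : measurable_fun setT D) (n : nat -> R) (a : nat) :
  is_condexp P (\1_G) D n ->
  P (G `&` D @^-1` [set a]) = (n a)%:E * P (D @^-1` [set a]).
Proof.
move=> [_ _ _ /(_ [set a] I)].
have mDa : measurable (D @^-1` [set a]).
  by rewrite -[_ @^-1` _]setTI; exact: mD.
rewrite integral_indic// => ->.
rewrite -integral_cst//; apply: eq_integral => x.
by rewrite inE /= => ->.
Qed.

Lemma condindep_nat d1 d2 (T1 : measurableType d1) (T2 : measurableType d2)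
  (X : Omega -> T1) (Y : Omega -> T2) (D : Omega -> nat)
  (mX : measurable_fun setT X) (mY : measurable_fun setT Y)
  (mD : measurable_fun setT D) :
  condindep P X Y D -> forall A B a, measurable A -> measurable B ->
  P (X @^-1` A `&` Y @^-1` B `&` D @^-1` [set a]) * P (D @^-1` [set a]) =
  P (X @^-1` A `&` D @^-1` [set a]) * P (Y @^-1` B `&` D @^-1` [set a]).
Proof.
move=> ci A B a mA mB; have [nX [nY [cX cY cXY]]] := ci A B mA mB.
have mXA : measurable (X @^-1` A) by rewrite -[_ @^-1` _]setTI; exact: mX.
have mYB : measurable (Y @^-1` B) by rewrite -[_ @^-1` _]setTI; exact: mY.
rewrite (condexp_nat (measurableI _ _ mXA mYB) mD a cXY).
rewrite (condexp_nat mXA mD a cX) (condexp_nat mYB mD a cY).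
have : P (D @^-1` [set a]) \is a fin_num by apply: fin_num_measure; rewrite -[_ @^-1` _]setTI; exact: mD.
move: (P _) => p /fineK <-.
by rewrite -!EFinM; congr EFin; ring.
Qed.

Lemma measurable_prod_nat dV (TV : measurableType dV) (g : TV * nat -> R) :
  (forall a, measurable_fun setT (fun v => g (v, a))) ->
  measurable_fun setT g.
Proof.
move=> hg _ Y mY; rewrite setTI.
have -> : g @^-1` Y = \bigcup_a ((fun v => g (v, a)) @^-1` Y `*` [set a]).
  apply/seteqP; split => [[v a] /= gY|[v a] [k _ [/= gY ->]]]//.
  by exists a.
apply: bigcup_measurable => k _; apply: measurableX => //.
by rewrite -[_ @^-1` _]setTI; exact: hg.
Qed.
End disc.
Section generic.
Local Open Scope ereal_scope.
Context (R : realType) (d : measure_display) (Omega : measurableType d)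
  (P : probability Omega R).
Context (dE dW : measure_display) (TE : measurableType dE) (TW : measurableType dW).
Variables (E : Omega -> TE) (W : Omega -> TW) (D : Omega -> nat).
Hypotheses (mE : measurable_fun setT E) (mW : measurable_fun setT W)
  (mD : measurable_fun setT D).
Hypothesis CI : condindep P E W D.

Let mpre dT (T : measurableType dT) (X : Omega -> T) (mX : measurable_fun setT X) A :
  measurable A -> measurable (X @^-1` A).
Proof. by move=> mA; rewrite -[_ @^-1` _]setTI; exact: mX. Qed.

Variable a : nat.
Let Da := D @^-1` [set a].
Let mDa : measurable Da. Proof. exact: mpre. Qed.
Let pa := P Da.
Let pa_ge0 : (0 <= fine pa)%R. Proof. by apply: fine_ge0; exact: measure_ge0. Qed.
Let pafin : pa \is a fin_num. Proof. exact: fin_num_measure. Qed.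

Let mWE : measurable_fun setT (fun x => (W x, E x)).
Proof. exact: measurable_fun_pair. Qed.

Lemma prod_step (G : set (TW * TE)) : measurable G ->
  (fine pa)%:E * P ((fun x => (W x, E x)) @^-1` G `&` Da) =
  \int[@law R d Omega P Da mDa dW TW W mW]_w
     (@law R d Omega P Da mDa dE TE E mE (xsection G w)).
Proof.
move=> mG.
pose m' := mscale (NngNum pa_ge0) (@law R d Omega P Da mDa _ _ _ mWE).
transitivity (m' G); first by [].
suff H : ((@law R d Omega P Da mDa dW TW W mW) \x
  (@law R d Omega P Da mDa dE TE E mE)) G = m' G by exact: (esym H).
apply: product_measure_unique => // B A mB mA.
change ((fine pa)%:E * P ((fun x => (W x, E x)) @^-1` (B `*` A) `&` Da) =
  P (W @^-1` B `&` Da) * P (E @^-1` A `&` Da)).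
have -> : (fun x => (W x, E x)) @^-1` (B `*` A) = E @^-1` A `&` W @^-1` B.
  by apply/seteqP; split => x /= [].
rewrite muleC fineK// (condindep_nat mE mW mD CI)//.
by rewrite muleC.
Qed.
End generic.
Lemma integral_indic_dom (R : realType) dT (T : measurableType dT)
  (mu : {measure set T -> \bar R}) (D1 S : set T) (g : T -> \bar R) :
  (\int[mu]_(x in D1) ((\1_S x)%:E * g x) = \int[mu]_(x in D1 `&` S) g x)%E.
Proof.
rewrite [LHS]integral_mkcond [RHS]integral_mkcond.
apply: eq_integral => x _.
rewrite /patch in_setI indicE.
case: (x \in D1); case: (x \in S) => /=.
- by rewrite mul1e.
- by rewrite mul0e.
- by [].
- by [].
Qed.
Definition qfun (R : realType) d (Omega : measurableType d) (P : probability Omega R)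
  dE (TE : measurableType dE) dV (TV : measurableType dV) d1 (T1 : measurableType d1)
  (E : Omega -> TE) (D : Omega -> nat) (f : (TV * nat)%type * TE -> T1)
  (A1 : set T1) (a : nat) (v : TV) : R :=
  fine (P (E @^-1` [set e | A1 (f ((v, a), e))] `&` D @^-1` [set a])).

Definition hfun (R : realType) d (Omega : measurableType d) (P : probability Omega R)
  dE (TE : measurableType dE) dV (TV : measurableType dV) d1 (T1 : measurableType d1)
  (E : Omega -> TE) (D : Omega -> nat) (f : (TV * nat)%type * TE -> T1)
  (A1 : set T1) (z : TV * nat) : R :=
  (qfun P E D f A1 z.2 z.1 / fine (P (D @^-1` [set z.2])))%R.

Lemma xsectionE T1 T2 (A : set (T1 * T2)) x : xsection A x = [set y | A (x, y)].
Proof. by apply/seteqP; split => y /=; rewrite /xsection /=; [move/set_mem|move/mem_set]. Qed.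

Section peraq.
Local Open Scope ereal_scope.
Context (R : realType) (d : measure_display) (Omega : measurableType d)
  (P : probability Omega R).
Context (dE dV d1 : measure_display) (TE : measurableType dE)
  (TV : measurableType dV) (T1 : measurableType d1).
Variables (E : Omega -> TE) (D : Omega -> nat) (f : (TV * nat)%type * TE -> T1).
Hypotheses (mE : measurable_fun setT E) (mD : measurable_fun setT D)
  (mf : measurable_fun setT f).
Variables (A1 : set T1) (mA1 : measurable A1).

Let mpre dT (T : measurableType dT) (X : Omega -> T) (mX : measurable_fun setT X) A :
  measurable A -> measurable (X @^-1` A).
Proof. by move=> mA; rewrite -[_ @^-1` _]setTI; exact: mX. Qed.

Lemma mfa (a : nat) : measurable_fun setT (fun p : TV * TE => f ((p.1, a), p.2)).
Proof.
apply: measurableT_comp => //; apply: measurable_fun_pair => //.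
exact: measurable_fun_pair.
Qed.

Lemma mGa a : measurable [set p : TV * TE | A1 (f ((p.1, a), p.2))].
Proof. by rewrite -[X in measurable X]setTI; exact: (mfa a). Qed.

Lemma msec a v : measurable [set e | A1 (f ((v, a), e))].
Proof.
have := measurable_xsection v (mGa a); by rewrite xsectionE.
Qed.
End peraq.
Section peraq2.
Local Open Scope ereal_scope.
Context (R : realType) (d : measure_display) (Omega : measurableType d)
  (P : probability Omega R).
Context (dE dV d1 : measure_display) (TE : measurableType dE)
  (TV : measurableType dV) (T1 : measurableType d1).
Variables (E : Omega -> TE) (D : Omega -> nat) (f : (TV * nat)%type * TE -> T1).
Hypotheses (mE : measurable_fun setT E) (mD : measurable_fun setT D)
  (mf : measurable_fun setT f).
Variables (A1 : set T1) (mA1 : measurable A1).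

Let mpre dT (T : measurableType dT) (X : Omega -> T) (mX : measurable_fun setT X) A :
  measurable A -> measurable (X @^-1` A).
Proof. by move=> mA; rewrite -[_ @^-1` _]setTI; exact: mX. Qed.

Lemma qfun_measurable a : measurable_fun setT (qfun P E D f A1 a).
Proof.
have mDa : measurable (D @^-1` [set a]) by exact: mpre.
have -> : qfun P E D f A1 a = (fun v => fine (@law R d Omega P _ mDa dE TE E mE
   (xsection [set p : TV * TE | A1 (f ((p.1, a), p.2))] v))).
  by apply/funext => v; rewrite /qfun lawE xsectionE.
apply: measurableT_comp; first exact: fine_measurable.
exact: (measurable_fun_xsection (@law R d Omega P _ mDa dE TE E mE) (mGa mf mA1 a)).
Qed.

Lemma qfun_ge0 a v : (0 <= qfun P E D f A1 a v)%R.
Proof. by apply: fine_ge0; exact: measure_ge0. Qed.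

Lemma qfun_le a v : (qfun P E D f A1 a v <= fine (P (D @^-1` [set a])))%R.
Proof.
have mDa : measurable (D @^-1` [set a]) by exact: mpre.
have mS : measurable (E @^-1` [set e | A1 (f ((v, a), e))] `&` D @^-1` [set a]).
  by apply: measurableI => //; exact: (mpre mE (msec mf mA1 a v)).
rewrite /qfun fine_le//; [exact: fin_num_measure|exact: fin_num_measure|].
by apply: le_measure; rewrite ?inE//; exact: subIsetr.
Qed.

Lemma hfun_measurable : measurable_fun setT (hfun P E D f A1).
Proof.
apply: measurable_prod_nat => a /=; rewrite /hfun /=.
apply: measurable_funM; first exact: qfun_measurable.
exact: measurable_cst.
Qed.

Lemma hfun_ge0 z : (0 <= hfun P E D f A1 z)%R.
Proof. by apply: divr_ge0; [exact: qfun_ge0|apply: fine_ge0; exact: measure_ge0]. Qed.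

Lemma hfun_le1 z : (hfun P E D f A1 z <= 1)%R.
Proof.
rewrite /hfun; have [->|p0] := eqVneq (fine (P (D @^-1` [set z.2]))) 0%R.
  by rewrite invr0 mulr0.
rewrite ler_pdivrMr ?mul1r; first exact: qfun_le.
by rewrite lt0r p0 fine_ge0// measure_ge0.
Qed.
End peraq2.
Section stepa.
Local Open Scope ereal_scope.
Context (R : realType) (d : measure_display) (Omega : measurableType d)
  (P : probability Omega R).
Context (dE dW dV d1 : measure_display) (TE : measurableType dE)
  (TW : measurableType dW) (TV : measurableType dV) (T1 : measurableType d1).
Variables (E : Omega -> TE) (W : Omega -> TW) (D : Omega -> nat)
  (psi : TW -> TV) (f : (TV * nat)%type * TE -> T1).
Hypotheses (mE : measurable_fun setT E) (mW : measurable_fun setT W)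
  (mD : measurable_fun setT D) (mpsi : measurable_fun setT psi)
  (mf : measurable_fun setT f).
Hypothesis CI : condindep P E W D.
Variables (A1 : set T1) (mA1 : measurable A1).

Let mpre dT (T : measurableType dT) (X : Omega -> T) (mX : measurable_fun setT X) A :
  measurable A -> measurable (X @^-1` A).
Proof. by move=> mA; rewrite -[_ @^-1` _]setTI; exact: mX. Qed.

Let Z x := (psi (W x), D x).
Let X1 x := f (Z x, E x).

Let mZ : measurable_fun setT Z.
Proof. apply: measurable_fun_pair => //; exact: measurableT_comp. Qed.

Let mX1 : measurable_fun setT X1.
Proof. apply: measurableT_comp => //; exact: measurable_fun_pair. Qed.

Variables (B : set TW) (mB : measurable B) (C : set (TV * nat)) (mC : measurable C).
Variable a : nat.
Let S := W @^-1` B `&` Z @^-1` C.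
Let Da := D @^-1` [set a].
Let mDa : measurable Da. Proof. exact: mpre. Qed.
Let mS : measurable S. Proof. by apply: measurableI; exact: mpre. Qed.

Let q := qfun P E D f A1 a.
Let mq : measurable_fun setT q. Proof. exact: qfun_measurable. Qed.

Lemma step_a_q : (fine (P Da))%:E * P (X1 @^-1` A1 `&` (Da `&` S)) =
  \int[P]_(x in Da `&` S) (q (psi (W x)))%:E.
Proof.
pose G := [set p : TW * TE | A1 (f ((psi p.1, a), p.2)) /\ B p.1 /\ C (psi p.1, a)].
have mg2 : measurable_fun setT (fun w : TW => (psi w, a)).
  by apply: measurable_fun_pair => //.
have mG : measurable G.
  have -> : G = (fun p : TW * TE => f ((psi p.1, a), p.2)) @^-1` A1 `&`
     (fst @^-1` B `&` (fun p : TW * TE => (psi p.1, a)) @^-1` C) by [].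
  have mg1 : measurable_fun setT (fun p : TW * TE => f ((psi p.1, a), p.2)).
    apply: (measurableT_comp mf) => //.
    apply: measurable_fun_pair => //; apply: measurable_fun_pair => //.
    exact: measurableT_comp.
  have mg3 : measurable_fun setT (fun p : TW * TE => (psi p.1, a)).
    exact: (measurableT_comp mg2).
  apply: measurableI; last apply: measurableI.
  - by rewrite -[X in measurable X]setTI; exact: mg1.
  - by rewrite -[X in measurable X]setTI; exact: measurable_fst.
  - by rewrite -[X in measurable X]setTI; exact: mg3.
have key1 : (fun x => (W x, E x)) @^-1` G `&` Da = X1 @^-1` A1 `&` (Da `&` S).
  apply/seteqP; split => x /=.
  - move=> [[hA [hB hC]] Dxa]; have Zx : Z x = (psi (W x), a) by rewrite /Z Dxa.
    by rewrite /X1 /S /= Zx.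
  - move=> [+ [Dxa [hB hC]]]; have Zx : Z x = (psi (W x), a) by rewrite /Z Dxa.
    by move: hC; rewrite /X1 /S /= Zx.
rewrite -key1 (prod_step mE mW mD CI a mG).
pose S' := B `&` [set w | C (psi w, a)].
have mS' : measurable S'.
  apply: measurableI => //; rewrite -[X in measurable X]setTI; exact: mg2.
transitivity (\int[@law R d Omega P Da mDa dW TW W mW]_w
  ((\1_S' w)%:E * (q (psi w))%:E)).
  apply: eq_integral => w _; rewrite lawE xsectionE indicE.
  case: (boolP (w \in S')) => hw.
  - move: hw; rewrite inE => -[hB hC]; rewrite mul1e /q /qfun fineK; last first.
      by apply: fin_num_measure; apply: measurableI => //; exact: (mpre mE (msec mf mA1 a (psi w))).
    congr (P (_ `&` _)); apply/seteqP; split => e /=; first by case.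
    by move=> hA; split.
  - rewrite mul0e (_ : [set y | G (w, y)] = set0) ?preimage_set0 ?set0I ?measure0//.
    apply/seteqP; split => e //= [_ [hB hC]].
    by move/negP: hw; apply; rewrite inE; split.
rewrite integral_law//; last 2 first.
- apply: emeasurable_funM; first by apply/measurable_EFinP; exact: measurable_indic.
  by apply/measurable_EFinP; exact: measurableT_comp.
- by move=> w; apply: mule_ge0; rewrite lee_fin ?indic_ge0 ?qfun_ge0.
rewrite preimage_setT setTI.
transitivity (\int[P]_(x in Da) ((\1_(W @^-1` S') x)%:E * (q (psi (W x)))%:E)).
  by apply: eq_integral => x _.
rewrite integral_indic_dom; congr (integral _ _ _).
apply/seteqP; split => x /=.
- move=> [Dxa [hB hC]]; have Zx : Z x = (psi (W x), a) by rewrite /Z Dxa.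
  by split => //; split => //; rewrite /preimage /= Zx.
- move=> [Dxa [hB hC]]; have Zx : Z x = (psi (W x), a) by rewrite /Z Dxa.
  by split => //; split => //; move: hC; rewrite /preimage /= Zx.
Qed.
Lemma step_a : \int[P]_(x in Da `&` S) (\1_(X1 @^-1` A1) x)%:E =
  \int[P]_(x in Da `&` S) (hfun P E D f A1 (Z x))%:E.
Proof.
have mDaS : measurable (Da `&` S) := measurableI _ _ mDa mS.
rewrite integral_indic //; last exact: (mpre mX1 mA1).
have hZ x : (Da `&` S) x -> hfun P E D f A1 (Z x) = (q (psi (W x)) / fine (P Da))%R.
  by move=> [Dxa _]; rewrite /hfun /Z /= Dxa.
have [p0|p0] := eqVneq (fine (P Da)) 0%R.
- have Pa0 : P Da = 0 by rewrite -[P Da]fineK ?p0 //; exact: fin_num_measure.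
  transitivity (0 : \bar R).
    apply/le_anti/andP; split; last exact: measure_ge0.
    rewrite -Pa0; apply: le_measure; rewrite ?inE//.
    + by apply: measurableI => //; exact: (mpre mX1 mA1).
    + by move=> x [_ []].
  apply/esym; rewrite integral0_eq// => x /hZ ->.
  by rewrite p0 invr0 mulr0.
- transitivity (\int[P]_(x in Da `&` S) ((fine (P Da))^-1%:E * (q (psi (W x)))%:E)).
    rewrite ge0_integralZl//; last 3 first.
    + apply: measurable_funTS; apply/measurable_EFinP; apply: measurableT_comp => //.
      exact: measurableT_comp.
    + by move=> x _; rewrite lee_fin qfun_ge0.
    + by rewrite lee_fin invr_ge0 fine_ge0// measure_ge0.
    rewrite -step_a_q muleA -EFinM mulVf// mul1e//.
  apply: eq_integral => x; rewrite inE => /hZ ->.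
  by rewrite -EFinM mulrC.
Qed.
End stepa.
Section step1.
Local Open Scope ereal_scope.
Context (R : realType) (d : measure_display) (Omega : measurableType d)
  (P : probability Omega R).
Context (dE dW dV d1 : measure_display) (TE : measurableType dE)
  (TW : measurableType dW) (TV : measurableType dV) (T1 : measurableType d1).
Variables (E : Omega -> TE) (W : Omega -> TW) (D : Omega -> nat)
  (psi : TW -> TV) (f : (TV * nat)%type * TE -> T1).
Hypotheses (mE : measurable_fun setT E) (mW : measurable_fun setT W)
  (mD : measurable_fun setT D) (mpsi : measurable_fun setT psi)
  (mf : measurable_fun setT f).
Hypothesis CI : condindep P E W D.
Variables (A1 : set T1) (mA1 : measurable A1).

Let mpre dT (T : measurableType dT) (X : Omega -> T) (mX : measurable_fun setT X) A :
  measurable A -> measurable (X @^-1` A).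
Proof. by move=> mA; rewrite -[_ @^-1` _]setTI; exact: mX. Qed.

Let Z x := (psi (W x), D x).
Let X1 x := f (Z x, E x).

Let mZ : measurable_fun setT Z.
Proof. apply: measurable_fun_pair => //; exact: measurableT_comp. Qed.

Let mX1 : measurable_fun setT X1.
Proof. apply: measurableT_comp => //; exact: measurable_fun_pair. Qed.

Variables (B : set TW) (mB : measurable B) (C : set (TV * nat)) (mC : measurable C).
Let S := W @^-1` B `&` Z @^-1` C.
Let mS : measurable S. Proof. by apply: measurableI; exact: mpre. Qed.

Lemma step1 : P (X1 @^-1` A1 `&` S) = \int[P]_(x in S) (hfun P E D f A1 (Z x))%:E.
Proof.
rewrite -integral_indic//; last exact: (mpre mX1 mA1).
pose F k := D @^-1` [set k] `&` S.
have mF k : measurable (F k) by apply: measurableI => //; exact: mpre.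
have SF : S = \bigcup_k F k.
  apply/seteqP; split => [x Sx|x [k _ [_ Sx]]]//.
  by exists (D x) => //; split.
have tF : trivIset setT F.
  apply/trivIsetP => i j _ _ ij; apply/seteqP; split => x //=.
  move=> [[Di _] [Dj _]].
  have ei : D x = i by exact: Di.
  have ej : D x = j by exact: Dj.
  by rewrite -ei -ej eqxx in ij.
rewrite SF ge0_integral_bigcup//; last first.
  apply: measurable_funTS; apply/measurable_EFinP; exact: (measurable_indic (mpre mX1 mA1)).
rewrite ge0_integral_bigcup//; first last.
- by move=> x _; rewrite lee_fin hfun_ge0.
- apply: measurable_funTS; apply/measurable_EFinP.
  exact: (measurableT_comp (hfun_measurable P mE mD mf mA1) mZ).
congr (limn _); apply/funext => n; apply: eq_bigr => k _.
exact: (step_a mE mW mD mpsi mf CI mA1 mB mC k).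
Qed.
End step1.
Lemma integrable01 (R : realType) d (Omega : measurableType d) (P : probability Omega R)
  (g : Omega -> R) : measurable_fun setT g -> (forall x, 0 <= g x <= 1)%R ->
  P.-integrable setT (EFin \o g).
Proof.
move=> mg g01; apply: (le_integrable measurableT (g := EFin \o cst 1%R)).
- exact/measurable_EFinP.
- move=> x _ /=; rewrite lee_fin normr1.
  by have /andP[g0 g1] := g01 x; rewrite ger0_norm.
- exact: finite_measure_integrable_cst.
Qed.

Section generic_main.
Local Open Scope ereal_scope.
Context (R : realType) (d : measure_display) (Omega : measurableType d)
  (P : probability Omega R).
Context (dE dW dV d1 d2 : measure_display) (TE : measurableType dE)
  (TW : measurableType dW) (TV : measurableType dV) (T1 : measurableType d1)
  (T2 : measurableType d2).
Variables (E : Omega -> TE) (W : Omega -> TW) (D : Omega -> nat)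
  (psi : TW -> TV) (kappa : TW -> T2) (f : (TV * nat)%type * TE -> T1).
Hypotheses (mE : measurable_fun setT E) (mW : measurable_fun setT W)
  (mD : measurable_fun setT D) (mpsi : measurable_fun setT psi)
  (mkappa : measurable_fun setT kappa) (mf : measurable_fun setT f).
Hypothesis CI : condindep P E W D.

Let mpre dT (T : measurableType dT) (X : Omega -> T) (mX : measurable_fun setT X) A :
  measurable A -> measurable (X @^-1` A).
Proof. by move=> mA; rewrite -[_ @^-1` _]setTI; exact: mX. Qed.

Let Z x := (psi (W x), D x).
Let X1 x := f (Z x, E x).

Let mZ : measurable_fun setT Z.
Proof. apply: measurable_fun_pair => //; exact: measurableT_comp. Qed.

Let mX1 : measurable_fun setT X1.
Proof. apply: measurableT_comp => //; exact: measurable_fun_pair. Qed.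

Let mKW : measurable_fun setT (fun x => kappa (W x)).
Proof. exact: measurableT_comp. Qed.

Lemma condindep_generic : condindep P X1 (fun x => kappa (W x)) Z.
Proof.
move=> A1 B2 mA1 mB2.
have mF : measurable ((fun x => kappa (W x)) @^-1` B2) by exact: mpre.
have [mB [mBm mB0 mBi mBeq]] := condexp_RN P mZ mF.
have hm := hfun_measurable P mE mD mf mA1.
have mXA : measurable (X1 @^-1` A1) by exact: mpre.
have h01 z : (0 <= hfun P E D f A1 z <= 1)%R.
  by rewrite hfun_ge0 (hfun_le1 P mE mD mf mA1).
exists (hfun P E D f A1), mB; split.
- split => //.
  + exact: (integrable_indic P (mpre mX1 mA1)).
  + apply: integrable01; first exact: (measurableT_comp hm mZ).
    by move=> x; exact: h01.
  + move=> C mC; have mZC : measurable (Z @^-1` C) by exact: mpre.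
    rewrite integral_indic//.
    have := step1 mE mW mD mpsi mf CI mA1 measurableT mC.
    by rewrite preimage_setT setTI.
- split => //.
  + exact: (integrable_indic P mF).
  + move=> C mC; have mZC : measurable (Z @^-1` C) by exact: mpre.
    rewrite integral_indic//.
    have := mBeq C (fun=> 1) mC (measurable_cst _) (fun=> lee01).
    rewrite integral_cst ?mul1e; last by apply: measurableI => //; exact: mpre.
    rewrite setIC => ->; apply: eq_integral => x _; by rewrite mule1.
- split.
  + exact: measurable_funM.
  + by apply: (integrable_indic P); apply: measurableI => //; exact: mpre.
  + apply: (le_integrable measurableT _ _ mBi).
      apply/measurable_EFinP; apply: measurableT_comp => //; exact: measurable_funM.
    move=> x _ /=; rewrite lee_fin normrM.
    have /andP[h0 h1] := h01 (Z x).
    by rewrite ger0_norm// ler_piMl.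
  + move=> C mC; have mZC : measurable (Z @^-1` C) by exact: mpre.
    rewrite integral_indic//; last by apply: measurableI; exact: mpre.
    have mKB : measurable (kappa @^-1` B2) by rewrite -[_ @^-1` _]setTI; exact: mkappa.
    have := step1 mE mW mD mpsi mf CI mA1 mKB mC.
    move=> H; rewrite -setIA; etransitivity; first exact: H.
    have mh' : measurable_fun setT (fun z => (hfun P E D f A1 z)%:E).
      exact/measurable_EFinP.
    have := mBeq C (fun z => (hfun P E D f A1 z)%:E) mC mh'.
    move=> /(_ (fun y => hfun_ge0 _ _ _ _ _ _)) H2.
    rewrite setIC; etransitivity; first exact: H2.
    apply: eq_integral => x _ /=; by rewrite -EFinM mulrC.
Qed.
End generic_main.
Definition vadd (R : realType) (n : nat) (u v : n.-tuple R) : n.-tuple R :=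
  [tuple tnth u i + tnth v i | i < n].

Section tuplemeas.
Context (R : realType) dT (T : measurableType dT) (n : nat).

Lemma measurable_vsub (F G : T -> n.-tuple R) : measurable_fun setT F ->
  measurable_fun setT G -> measurable_fun setT (fun x => vsub (F x) (G x)).
Proof.
move=> mF mG; apply/measurable_fun_tnthP => i.
have -> : (tnth (T:=R))^~ i \o (fun x => vsub (F x) (G x)) =
    (fun x => tnth (F x) i - tnth (G x) i).
  by apply/funext => x /=; rewrite /vsub tnth_mktuple.
apply: measurable_funB.
- exact: (measurableT_comp (measurable_tnth i) mF).
- exact: (measurableT_comp (measurable_tnth i) mG).
Qed.

Lemma measurable_vadd (F G : T -> n.-tuple R) : measurable_fun setT F ->
  measurable_fun setT G -> measurable_fun setT (fun x => vadd (F x) (G x)).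
Proof.
move=> mF mG; apply/measurable_fun_tnthP => i.
have -> : (tnth (T:=R))^~ i \o (fun x => vadd (F x) (G x)) =
    (fun x => tnth (F x) i + tnth (G x) i).
  by apply/funext => x /=; rewrite /vadd tnth_mktuple.
apply: measurable_funD.
- exact: (measurableT_comp (measurable_tnth i) mF).
- exact: (measurableT_comp (measurable_tnth i) mG).
Qed.

Lemma vadd_vsub (u v : n.-tuple R) : vadd v (vsub u v) = u.
Proof.
apply: eq_from_tnth => i; rewrite /vadd /vsub !tnth_mktuple.
by rewrite addrC subrK.
Qed.

Lemma measurable_of_vcondexp d (Omega : measurableType d) (P : probability Omega R)
  dZ (TZ : measurableType dZ) (X : Omega -> n.-tuple R) (Z : Omega -> TZ)
  (m : TZ -> n.-tuple R) : is_vcondexp P X Z m -> measurable_fun setT m.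
Proof.
move=> h; apply/measurable_fun_tnthP => i.
by have [] := h i.
Qed.
End tuplemeas.

Lemma condindep_sym (R : realType) d (Omega : measurableType d) (P : probability Omega R)
  d1 d2 d3 (T1 : measurableType d1) (T2 : measurableType d2) (T3 : measurableType d3)
  (X : Omega -> T1) (Y : Omega -> T2) (Z : Omega -> T3) :
  condindep P X Y Z -> condindep P Y X Z.
Proof.
move=> h A B mA mB; have [mA' [mB' [c1 c2 c3]]] := h B A mB mA.
exists mB', mA'; split => //.
have -> : (fun z => mB' z * mA' z) = (fun z => mA' z * mB' z).
  by apply/funext => z; rewrite mulrC.
by rewrite setIC.
Qed.

Lemma condindep_ext (R : realType) d (Omega : measurableType d) (P : probability Omega R)
  d1 d2 d3 (T1 : measurableType d1) (T2 : measurableType d2) (T3 : measurableType d3)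
  (X X' : Omega -> T1) (Y Y' : Omega -> T2) (Z Z' : Omega -> T3) :
  (forall w, X w = X' w) -> (forall w, Y w = Y' w) -> (forall w, Z w = Z' w) ->
  condindep P X Y Z -> condindep P X' Y' Z'.
Proof.
move=> eX eY eZ.
have -> : X' = X by apply/funext => w; rewrite eX.
have -> : Y' = Y by apply/funext => w; rewrite eY.
by have -> : Z' = Z by apply/funext => w; rewrite eZ.
Qed.

Unset Implicit Arguments.
Theorem lemma3p4 (R : realType) (d : measure_display) (Omega : measurableType d)
    (P : probability Omega R) (p q K : nat)
    (Sset : set (p.-tuple R))
    (S : nat -> Omega -> p.-tuple R) (A : nat -> Omega -> nat)
    (Ufun : p.-tuple R -> nat -> p.-tuple R -> R) (M : R)
    (Sstar : forall t : nat, t.-tuple nat -> Omega -> p.-tuple R)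
    (phi : p.-tuple R -> q.-tuple R)
    (* the process *)
    (mSset : measurable Sset)
    (mS : forall t, measurable_fun setT (S t))
    (SinS : forall t w, S t w \in Sset)
    (mA : forall t, measurable_fun setT (A t))
    (AinA : forall t w, (0 < A t w <= K)%N)
    (mSstar : forall t a, measurable_fun setT (Sstar t a))
    (mU : measurable_fun setT
            (fun x : (p.-tuple R * nat) * p.-tuple R => Ufun x.1.1 x.1.2 x.2))
    (Ubnd : {ae P, forall w, forall t, `|Ufun (S t w) (A t w) (S t.+1 w)| <= M})
    (Sint : forall t (i : 'I_p),
              P.-integrable setT (EFin \o (fun w => tnth (S t w) i)))
    (hA0 : markov_A0 P S A)
    (hC1 : consistency_C1 S A Sstar)
    (hC2 : positivity_C2 P K S A)
    (hC3 : ignorability_C3 P K S A Sstar)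
    (mphi : measurable_fun Sset phi)
    (t : nat) :
  let U := fun w => Ufun (S t w) (A t w) (S t.+1 w) in
  let Y := fun w => cons_tuple (U w) (S t.+1 w) in
  let Sphi := fun w => phi (S t w) in
  ((exists m : q.-tuple R * nat -> (p.+1).-tuple R,
      is_vcondexp P Y (fun w => (Sphi w, A t w)) m /\
      condindep P (fun w => vsub (Y w) (m (Sphi w, A t w))) (S t) (A t))
   \/
   (exists g : q.-tuple R -> p.-tuple R,
      is_vcondexp P (S t) Sphi g /\
      condindep P (fun w => vsub (S t w) (g (Sphi w)))
                  (fun w => (Y w, Sphi w)) (A t))) ->
  condindep P Y (S t) (fun w => (Sphi w, A t w)).
Proof.
move=> U Y Sphi H.
have mU' : measurable_fun setT U.
  exact: (measurableT_comp mU (measurable_fun_pair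
    (measurable_fun_pair (mS t) (mA t)) (mS t.+1))).
have mY : measurable_fun setT Y by exact: (measurable_cons mU' (mS t.+1)).
pose c : q.-tuple R := [tuple 0%R | i < q].
pose phi' := fun s => if s \in Sset then phi s else c.
have mphi' : measurable_fun setT phi'.
  move=> _ B mB; rewrite setTI.
  have -> : phi' @^-1` B = (Sset `&` phi @^-1` B) `|` (~` Sset `&` [set _ | B c]).
    apply/seteqP; split => s; rewrite /phi' /preimage /=.
    - case: ifPn => [/set_mem sS hB|/negP sS hB]; [by left|right; split => //].
      by move=> /mem_set.
    - move=> [[sS hB]|[sS hB]]; first by rewrite ifT// inE.
      by rewrite ifF//; apply/negP => /set_mem.
  apply: measurableU; first exact: mphi.
  apply: measurableI; first exact: measurableC.
  by have [hc|hc] := pselect (B c); [rewrite (_ : [set _ | B c] = setT)|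
    rewrite (_ : [set _ | B c] = set0)] => //; apply/seteqP; split.
have phi'E w : phi' (S t w) = Sphi w by rewrite /phi' SinS.
have mSphi : measurable_fun setT Sphi.
  by apply: (eq_measurable_fun (fun w => phi' (S t w))) => [w _|]; [exact: phi'E|exact: measurableT_comp].
case: H => [[m [hm ci]]|[g [hg ci]]].
- have mm := measurable_of_vcondexp hm.
  have mZ : measurable_fun setT (fun w => (Sphi w, A t w)) by exact: measurable_fun_pair.
  have mE : measurable_fun setT (fun w => vsub (Y w) (m (Sphi w, A t w))).
    by apply: measurable_vsub => //; exact: measurableT_comp.
  have mf : measurable_fun setT
      (fun ze : (q.-tuple R * nat) * (p.+1).-tuple R => vadd (m ze.1) ze.2).
    by apply: measurable_vadd => //; exact: measurableT_comp.
  have := condindep_generic mE (mS t) (mA t) mphi' (@measurable_id _ _ setT) mf ci.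
  apply: condindep_ext => w /=; rewrite ?phi'E//.
  by rewrite vadd_vsub.
- have mg := measurable_of_vcondexp hg.
  have mW : measurable_fun setT (fun w => (Y w, Sphi w)) by exact: measurable_fun_pair.
  have mE : measurable_fun setT (fun w => vsub (S t w) (g (Sphi w))).
    by apply: measurable_vsub => //; exact: measurableT_comp.
  have mf : measurable_fun setT
      (fun ze : (q.-tuple R * nat) * p.-tuple R => vadd (g ze.1.1) ze.2).
    apply: measurable_vadd => //; apply: measurableT_comp => //.
    exact: measurableT_comp.
  have := condindep_generic mE mW (mA t) (@measurable_snd _ _ _ _)
    (@measurable_fst _ _ _ _) mf ci.
  move=> /condindep_sym; apply: condindep_ext => w //=.
  by rewrite vadd_vsub.
Qed.
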